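(* Let $M\in\mathbb R^{n\times n}$, $Q\in\mathbb R^{n\times d}$, $q\in\mathbb R^n$, and for $\epsilon\in\mathbb R$ let $S^\epsilon=\{Q\theta+q+\boldsymbol\epsilon:\theta\in\mathbb R^d\}$. For every complementary basis $B$, the set of $\epsilon\in\mathbb R$ such that $S^\epsilon\cap\mathcal C(B)\neq\emptyset$ but $S^\epsilon\cap\operatorname{int}\mathcal C(B)=\emptyset$ is finite.
   Context: $\boldsymbol\epsilon=(\epsilon,\epsilon^2,\dots,\epsilon^n)^T\in\mathbb R^n$ is the lexicographic perturbation vector. Let $A=[\,I\;\;-M\,]\in\mathbb R^{n\times 2n}$, columns indexed by $\{1,\dots,2n\}$; $A_{\cdot J}$ is the submatrix of columns indexed by $J$. Complementary index: $\bar i=i+n$ if $i\le n$, $\bar i=i-n$ if $i>n$. A set $J$ is complementary if $i\in J\Rightarrow\bar i\notin J$. A complementary basis is a complementary set $B$ with $|B|=n$ and $A_{\cdot B}$ invertible. Complementary cone: $\mathcal C(J)=\{A_{\cdot J}\lambda:\lambda\ge0\}$. *)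

(* Defs.v *)
From HB Require Import structures.
From mathcomp Require Import all_boot all_order all_algebra.
Set Implicit Arguments. Unset Strict Implicit. Unset Printing Implicit Defensive.
Import Order.TTheory GRing.Theory Num.Theory.
Local Open Scope ring_scope.

Section Defs.
Variable R : realFieldType.
Variable n : nat.

Definition Amat (M : 'M[R]_n) : 'M[R]_(n, n + n) := row_mx 1%:M (- M).

Definition cidx (i : 'I_(n + n)) : nat := if (i < n)%N then (i + n)%N else (i - n)%N.

Definition complementary (J : {set 'I_(n + n)}) : Prop :=
  forall i j : 'I_(n + n), i \in J -> nat_of_ord j = cidx i -> j \notin J.

(* A_{.J} for |J| = n: columns of A indexed by J in increasing order *)
Definition AsubJ (M : 'M[R]_n) (J : {set 'I_(n + n)}) : 'M[R]_n :=
  colsub (fun k : 'I_n => nth (lshift n k) (enum J) k) (Amat M).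

Definition compl_basis (M : 'M[R]_n) (B : {set 'I_(n + n)}) : Prop :=
  [/\ complementary B, #|B| = n & AsubJ M B \in unitmx].

(* complementary cone C(J) = { A_{.J} lambda : lambda >= 0 } *)
Definition in_cone (M : 'M[R]_n) (J : {set 'I_(n + n)}) (x : 'cV[R]_n) : Prop :=
  exists lam : 'cV[R]_(n + n),
    (forall j, 0 <= lam j 0) /\ (forall j, j \notin J -> lam j 0 = 0) /\
    x = Amat M *m lam.

Definition in_interior (P : 'cV[R]_n -> Prop) (x : 'cV[R]_n) : Prop :=
  exists r : R, 0 < r /\
    forall y : 'cV[R]_n, (forall i, `|y i 0 - x i 0| < r) -> P y.

(* lexicographic perturbation vector (eps, eps^2, ..., eps^n)^T *)
Definition epsvec (e : R) : 'cV[R]_n := \col_(i < n) e ^+ i.+1.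

End Defs.

(* Main.v *)
Set Warnings "-notation-overridden,-ambiguous-paths,-notation-incompatible-prefix".
Require Import Defs.
From Stdlib Require Import Classical.
From HB Require Import structures.
From mathcomp Require Import all_boot all_order all_algebra.
Import Order.TTheory GRing.Theory Num.Theory.
Local Open Scope ring_scope.

Section H.
Variable R : realFieldType.

Lemma exists_small (I : finType) (a : I -> R) :
  (forall i, 0 < a i) -> exists t, 0 < t /\ forall i, t <= a i.
Proof.
move=> Ha.
have : forall s : seq I, exists t, 0 < t /\ forall i, i \in s -> t <= a i.
  elim=> [|x s [t [t0 Ht]]]; first by exists 1; split.
  exists (Num.min t (a x)); split; first by rewrite lt_min t0 Ha.
  move=> i; rewrite inE => /orP [/eqP -> | Hi].
    by rewrite ge_min lexx orbT.
  by rewrite ge_min Ht.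
move=> /(_ (enum I)) [t [t0 Ht]]; exists t; split => // i.
by apply: Ht; rewrite mem_enum.
Qed.

Lemma aux_bound (K c t : R) : 0 <= K -> 0 < c -> 0 <= t -> t <= c / (K + 1) ->
  t * K < c.
Proof.
move=> K0 c0 t0 ht.
have K1 : 0 < K + 1 by rewrite ltr_wpDl.
have a0 : 0 < c / (K + 1) by rewrite divr_gt0.
apply: (le_lt_trans (ler_wpM2r K0 ht)).
rewrite -{2}(divfK (lt0r_neq0 K1) c) ltr_pM2l //.
by rewrite ltrDl.
Qed.

Lemma poly_roots_fin (p : {poly R}) : p != 0 -> exists s : seq R, forall x, root p x -> x \in s.
Proof.
have : forall m (p : {poly R}), (size p <= m)%N -> p != 0 -> exists s : seq R, forall x, root p x -> x \in s.
  elim=> [|m IH] {}p.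
    by rewrite leqn0 size_poly_eq0 => ->.
  move=> Hs p0.
  case: (Classical_Prop.classic (exists x, root p x)) => [[x /factor_theorem [r Hr]] | Hno]; last first.
    by exists [::] => y Hy; exfalso; apply: Hno; exists y.
  have r0 : r != 0 by apply: contraNneq p0 => r0; rewrite Hr r0 mul0r.
  have [s Hs'] : exists s : seq R, forall x, root r x -> x \in s.
    apply: IH => //.
    move: Hs; rewrite Hr size_mul // ?size_XsubC ?polyXsubC_eq0 //.
    by rewrite addn2.
  exists (x :: s) => y; rewrite Hr rootM root_XsubC inE => /orP [/Hs' -> | ->].
    by rewrite orbT.
  by [].
by move=> H p0; apply: (H (size p)).
Qed.

Lemma alt n d (P : 'M[R]_(n, d)) (Z : {set 'I_n}) :
  (exists u : 'cV[R]_d, forall i, i \in Z -> (P *m u) i 0 = 1) \/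
  (exists w : 'rV[R]_n, w != 0 /\ (forall i, i \notin Z -> w 0 i = 0) /\ w *m P = 0).
Proof.
pose b : 'rV[R]_n := \row_i (i \in Z)%:R.
pose X : 'M[R]_(d, n) := \matrix_(l, i) (P i l * b 0 i).
case: (boolP (b <= X)%MS) => [/submxP [u' Hu'] | Hn].
  left; exists u'^T => i iZ.
  have := congr1 (fun m : 'rV[R]_n => m 0 i) Hu'; rewrite !mxE iZ /=.
  move=> E; apply: (etrans _ (esym E)).
  by apply: eq_bigr => l _; rewrite !mxE iZ mulr1 mulrC.
right.
rewrite submxE in Hn.
have [j Hj] : exists j, (b *m cokermx X) 0 j != 0.
  apply/existsP; apply: contraNT Hn; rewrite negb_exists => /forallP H.
  by apply/eqP/matrixP => x y; rewrite ord1 [RHS]mxE; apply/eqP; move: (H y); rewrite negbK.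
set Y := cokermx X in Hj.
have XY : X *m Y = 0 by apply: mulmx_coker.
clearbody Y.
exists (\row_i ((i \in Z)%:R * Y i j)); split; [|split].
- move: Hj; rewrite mxE => Hj.
  have [k Hk] : exists k, b 0 k * Y k j != 0.
    apply/existsP; apply: contraNT Hj; rewrite negb_exists => /forallP H.
    by apply/eqP; apply: big1 => k _; apply/eqP; rewrite -[_ == _]negbK H.
  apply/eqP => /matrixP /(_ 0 k); rewrite !mxE => E.
  by move: Hk; rewrite mxE E eqxx.
- by move=> i iZ; rewrite mxE (negbTE iZ) mul0r.
- apply/matrixP => x l; rewrite ord1 [RHS]mxE.
  rewrite -[RHS](_ : (X *m Y) l j = 0); last by rewrite XY mxE.
  rewrite !mxE; apply: eq_bigr => i _; rewrite !mxE.
  by rewrite mulrC mulrA.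
Qed.

Lemma perturb n (c v : 'cV[R]_n) : (forall i, 0 <= c i 0) ->
  (forall i, c i 0 = 0 -> v i 0 = 1) ->
  exists t, 0 < t /\ forall i, 0 < c i 0 + t * v i 0.
Proof.
move=> c0 cv.
have [t [t0 Ht]] : exists t, 0 < t /\ forall i,
    t <= (fun i => if c i 0 == 0 then 1 else c i 0 / (`|v i 0| + 1)) i.
  apply: exists_small => i /=; case: eqP => // /eqP ci.
  by apply: divr_gt0; [rewrite lt_neqAle eq_sym ci c0 | rewrite ltr_wpDl].
exists t; split => // i; move: (Ht i) => /=.
case: eqP => [ci _ | /eqP ci ht].
  by rewrite ci (cv _ ci) add0r mulr1.
have cpos : 0 < c i 0 by rewrite lt_neqAle eq_sym ci c0.
have := @aux_bound _ _ t (normr_ge0 (v i 0)) cpos (ltW t0) ht.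
rewrite -subr_gt0 => H; apply: (lt_le_trans H).
rewrite lerD2l -[t * v i 0]opprK lerN2.
by rewrite (le_trans (ler_norm _)) // normrN normrM gtr0_norm.
Qed.

Lemma eps_roots n (a : R) (b : 'rV[R]_n) : b != 0 ->
  exists s : seq R, forall e, a + (b *m epsvec n e) 0 0 = 0 -> e \in s.
Proof.
move=> b0.
pose p : {poly R} := a%:P + \sum_(k < n) b 0 k *: 'X^(k.+1).
have pe : forall e, p.[e] = a + (b *m epsvec n e) 0 0.
  move=> e; rewrite hornerD hornerC horner_sum mxE; congr (_ + _).
  by apply: eq_bigr => k _; rewrite hornerZ hornerXn mxE.
have [k Hk] : exists k, b 0 k != 0.
  apply/existsP; apply: contraNT b0; rewrite negb_exists => /forallP H.
  by apply/eqP/matrixP => x y; rewrite ord1 [RHS]mxE; apply/eqP; move: (H y); rewrite negbK.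
have p0 : p != 0.
  apply: contraNneq Hk => p0.
  have := congr1 (fun q : {poly R} => q`_k.+1) p0.
  rewrite coef0 coefD coefC /= add0r coef_sum => <-.
  rewrite (bigD1 k) //= coefZ coefXn eqxx mulr1 big1 ?addr0 // => j jk.
  have jk' : (nat_of_ord j == nat_of_ord k) = false := negbTE jk.
  by rewrite coefZ coefXn eqSS eq_sym jk' mulr0.
have [s Hs] := poly_roots_fin p p0.
by exists s => e He; apply: Hs; rewrite /root pe He.
Qed.

Section C.
Variable n : nat.
Variable M : 'M[R]_n.
Variable B : {set 'I_(n + n)}.
Hypothesis HB : #|B| = n.

Let f (k : 'I_n) : 'I_(n + n) := nth (lshift n k) (enum B) k.

Lemma size_enumB : size (enum B) = n.
Proof. by rewrite -cardE HB. Qed.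

Lemma f_in k : f k \in B.
Proof. by rewrite -mem_enum /f mem_nth // size_enumB. Qed.

Lemma cone_mu x : in_cone M B x ->
  exists mu : 'cV[R]_n, (forall k, 0 <= mu k 0) /\ x = AsubJ M B *m mu.
Proof.
move=> [lam [l0 [lB ->]]].
exists (\col_k lam (f k) 0); split; first by move=> k; rewrite mxE.
apply/matrixP => i j; rewrite ord1 !mxE.
rewrite (bigID (mem B)) /= [X in _ + X]big1 ?addr0; last first.
  by move=> j0 /lB ->; rewrite mulr0.
rewrite -big_enum /= (big_nth (lshift n i)) size_enumB big_mkord.
apply: eq_bigr => k _; rewrite !mxE /f.
by rewrite (set_nth_default (lshift n k)) // size_enumB.
Qed.

Lemma mu_cone (mu : 'cV[R]_n) : (forall k, 0 <= mu k 0) -> in_cone M B (AsubJ M B *m mu).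
Proof.
move=> m0.
exists (\col_j \sum_k (j == f k)%:R * mu k 0); split; [|split].
- move=> j; rewrite mxE; apply: sumr_ge0 => k _; by rewrite mulr_ge0.
- move=> j jB; rewrite mxE; apply: big1 => k _.
  case: eqP => [E|]; last by rewrite mul0r.
  by move: jB; rewrite E f_in.
apply/matrixP => i j; rewrite ord1 !mxE.
symmetry; under eq_bigr => j0 _ do rewrite [X in _ * X]mxE mulr_sumr.
rewrite exchange_big /=; apply: eq_bigr => k _.
rewrite [in RHS]mxE.
rewrite (bigD1 (f k)) //= eqxx mul1r big1 ?addr0 //.
by move=> j0 /negbTE ->; rewrite mul0r mulr0.
Qed.


Lemma interior_G x : AsubJ M B \in unitmx ->
  (forall i, 0 < (invmx (AsubJ M B) *m x) i 0) -> in_interior (in_cone M B) x.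
Proof.
set A := AsubJ M B; set G := invmx A => Au cpos.
set c := G *m x.
have [t [t0 Ht]] : exists t, 0 < t /\ forall i,
    t <= (fun i => c i 0 / (\sum_j `|G i j| + 1)) i.
  apply: exists_small => i /=; apply: divr_gt0 => //.
  by rewrite ltr_wpDl // sumr_ge0.
exists t; split => // y Hy.
rewrite -(mulKVmx Au y); apply: mu_cone => i.
have -> : G *m y = c + G *m (y - x) by rewrite mulmxBr addrC subrK.
rewrite mxE.
have Kb : `|(G *m (y - x)) i 0| <= t * \sum_j `|G i j|.
  rewrite mxE mulr_sumr (le_trans (ler_norm_sum _ _ _)) //.
  apply: ler_sum => j _; rewrite normrM mulrC ler_wpM2r //.
  by rewrite !mxE ltW // distrC.
have := @aux_bound _ _ t (sumr_ge0 _ (fun j _ => normr_ge0 (G i j))) (cpos i) (ltW t0) (Ht i).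
move=> H1.
have : - `|(G *m (y - x)) i 0| <= (G *m (y - x)) i 0 by rewrite lerNnormlW.
move=> H2.
apply: (le_trans _ (lerD (lexx (c i 0)) H2)); rewrite subr_ge0.
exact: (le_trans Kb (ltW H1)).
Qed.

End C.
End H.

Arguments alt {R n d}.
Arguments perturb {R n c v}.
Arguments eps_roots {R n}.
Arguments cone_mu {R n M B} HB {x}.
Arguments interior_G {R n M B} HB {x}.

Theorem mainTheorem9 (R : realFieldType) (n d : nat) (M : 'M[R]_n)
    (Q : 'M[R]_(n, d)) (q : 'cV[R]_n) (B : {set 'I_(n + n)}) :
  compl_basis M B ->
  exists s : seq R, forall e : R,
    (exists theta : 'cV[R]_d, in_cone M B (Q *m theta + q + epsvec n e)) ->
    ~ (exists theta : 'cV[R]_d,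
         in_interior (in_cone M B) (Q *m theta + q + epsvec n e)) ->
    e \in s.
Proof.
move=> [_ HBc Au].
set A := AsubJ M B in Au *; set G := invmx A.
pose X th e := Q *m th + q + epsvec n e.
have key : forall Z : {set 'I_n}, exists s : seq R, forall e (th : 'cV[R]_d),
  (forall i, 0 <= (G *m X th e) i 0) ->
  (forall i, i \in Z -> (G *m X th e) i 0 = 0) ->
  (forall i, (G *m X th e) i 0 = 0 -> i \in Z) ->
  ~ (exists th', forall i, 0 < (G *m X th' e) i 0) -> e \in s.
  move=> Z; case: (alt (G *m Q) Z) => [[u Hu]|[w [w0 [wZ wP]]]].
  - exists [::] => e th H0 HZ HZ' Hno; exfalso; apply: Hno.
    have [t [t0 Ht]] := perturb H0 (v := G *m Q *m u) (fun i ci => Hu i (HZ' i ci)).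
    exists (th + t *: u) => i.
    have -> : X (th + t *: u) e = X th e + t *: (Q *m u).
      rewrite /X mulmxDr -scalemxAr -!addrA; congr (_ + _).
      by rewrite addrC addrA.
    have -> : G *m (X th e + t *: (Q *m u)) = G *m X th e + t *: (G *m Q *m u) by rewrite mulmxDr -scalemxAr mulmxA.
    by rewrite mxE [Y in _ + Y]mxE; apply: Ht.
  - have b0 : w *m G != 0.
      by apply: contraNneq w0 => E; rewrite -(mulmxKV Au w) E mul0mx.
    have [s Hs] := eps_roots ((w *m G *m q) 0 0) (w *m G) b0.
    exists s => e th H0 HZ HZ' Hno; apply: Hs.
    have E0 : (w *m (G *m X th e)) 0 0 = 0.
      rewrite mxE big1 // => i _; case: (boolP (i \in Z)) => iZ.
        by rewrite HZ // mulr0.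
      by rewrite wZ // mul0r.
    rewrite /X !mulmxDr !mulmxA in E0.
    rewrite mulmxA in wP; rewrite wP mul0mx add0r mxE in E0.
    exact: E0.
have [f Hf] := fin_all_exists key.
exists (flatten [seq f Z | Z <- enum [set: {set 'I_n}]]).
move=> e [th Hc] Hni.
have H0 : forall i, 0 <= (G *m X th e) i 0.
  move: Hc => /(cone_mu HBc) [mu [m0 E]] i.
  by rewrite /X E /G mulKmx.
apply/flatten_mapP; exists [set i | (G *m X th e) i 0 == 0]; first by rewrite mem_enum in_setT.
apply: (Hf _ e th H0).
- by move=> i; rewrite inE => /eqP.
- by move=> i ci; rewrite inE ci.
- move=> [th' Hth']; apply: Hni; exists th'; exact: (interior_G HBc Au).
Qed.
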